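(* Let $\alpha=\omega^{\delta_n}s_n+\dots+\omega^{\delta_1}s_1+m$ be an infinite ordinal written in Cantor normal form, where $n,s_1,\dots,s_n\in\mathbb N=\{1,2,\dots\}$, $0<\delta_1<\dots<\delta_n$ and $m\in\omega$. Then $\mathbb P(\alpha)\cong\prod_{i=1}^n(\mathbb P(\omega^{\delta_i}))^{s_i}$, $\mathrm{sm}\,\mathbb P(\alpha)\cong\prod_{i=1}^n(\mathrm{sm}\,\mathbb P(\omega^{\delta_i}))^{s_i}$ and $\mathrm{sq}\,\mathbb P(\alpha)\cong\prod_{i=1}^n(\mathrm{sq}\,\mathbb P(\omega^{\delta_i}))^{s_i}$.
   Context: For an ordinal $X$, $\mathbb P(X)=\{f[X]: f:X\to X \text{ strictly increasing}\}$, ordered by $\subset$ (the poset of copies of $X$). Products of (pre)orders are ordered coordinatewise. For a preorder $\mathbb P=\langle P,\le\rangle$: $p\perp q$ means no $r$ satisfies $r\le p,q$; the separative modification is $\mathrm{sm}(\mathbb P)=\langle P,\le^*\rangle$ with $p\le^* q$ iff $\forall r\le p\,\exists s\le r\ (s\le q)$; the separative quotient $\mathrm{sq}(\mathbb P)$ is the antisymmetric quotient of $\mathrm{sm}(\mathbb P)$ (identify $p,q$ when $p\le^*q\le^*p$). *)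

(* Defs.v *)
(* Ordinals are represented by well-ordered types. *)
From Stdlib Require Import List Arith.

Record woset := WoSet { wcar : Type; wlt : wcar -> wcar -> Prop }.

Definition strict_total {T : Type} (R : T -> T -> Prop) : Prop :=
  (forall x, ~ R x x) /\ (forall x y z, R x y -> R y z -> R x z) /\
  (forall x y, R x y \/ x = y \/ R y x).

Definition well_order {T : Type} (R : T -> T -> Prop) : Prop :=
  strict_total R /\ well_founded R.

Definition wseg (W : woset) (d : wcar W) : woset :=
  WoSet {x : wcar W | wlt W x d} (fun x y => wlt W (proj1_sig x) (proj1_sig y)).

(* omega^W : finitely supported functions W -> nat, compared at the
   largest point where they differ (standard model of ordinal exponentiation) *)
Definition womega_pow (W : woset) : woset :=
  WoSet {f : wcar W -> nat | exists l : list (wcar W), forall x, f x <> 0 -> In x l}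
        (fun f g => exists x, proj1_sig f x < proj1_sig g x /\
                    forall y, wlt W x y -> proj1_sig f y = proj1_sig g y).

Definition wsum (A B : woset) : woset :=
  WoSet (wcar A + wcar B)%type
        (fun u v => match u, v with
                    | inl a, inl a' => wlt A a a'
                    | inl _, inr _ => True
                    | inr _, inl _ => False
                    | inr b, inr b' => wlt B b b'
                    end).

(* ordinal product A * s (s a natural number): s consecutive copies of A *)
Definition wmuln (A : woset) (s : nat) : woset :=
  WoSet ({j : nat | j < s} * wcar A)%type
        (fun u v => proj1_sig (fst u) < proj1_sig (fst v) \/
                    (proj1_sig (fst u) = proj1_sig (fst v) /\ wlt A (snd u) (snd v))).

Definition wfin (m : nat) : woset :=
  WoSet {j : nat | j < m} (fun u v => proj1_sig u < proj1_sig v).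

(* Cantor normal form  omega^(seg d_(k-1)) * s_(k-1) + ... + omega^(seg d_0) * s_0 + m *)
Fixpoint cnf (D : woset) (d : nat -> wcar D) (s : nat -> nat) (k m : nat) : woset :=
  match k with
  | 0 => wfin m
  | S k' => wsum (wmuln (womega_pow (wseg D (d k'))) (s k')) (cnf D d s k' m)
  end.

Record preord := PreOrd { pcar : Type; ple : pcar -> pcar -> Prop }.

Definition strictly_increasing {W : woset} (f : wcar W -> wcar W) : Prop :=
  forall x y, wlt W x y -> wlt W (f x) (f y).

Definition copiesPO (W : woset) : preord :=
  PreOrd {S : wcar W -> Prop | exists f : wcar W -> wcar W,
                 strictly_increasing f /\ forall y, S y <-> exists x, y = f x}
         (fun S1 S2 => forall y, proj1_sig S1 y -> proj1_sig S2 y).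

Definition smle (P : preord) (p q : pcar P) : Prop :=
  forall r, ple P r p -> exists t, ple P t r /\ ple P t q.

Definition smPO (P : preord) : preord := PreOrd (pcar P) (smle P).

Definition sqPO (P : preord) : preord :=
  PreOrd {C : pcar P -> Prop | exists p, forall q, C q <-> (smle P p q /\ smle P q p)}
         (fun C1 C2 => exists p q, proj1_sig C1 p /\ proj1_sig C2 q /\ smle P p q).

Definition prodPO (I : Type) (F : I -> preord) : preord :=
  PreOrd (forall i : I, pcar (F i)) (fun x y => forall i, ple (F i) (x i) (y i)).

Definition po_iso (P Q : preord) : Prop :=
  exists f : pcar P -> pcar Q,
    (forall x y, f x = f y -> x = y) /\ (forall z, exists x, f x = z) /\
    (forall x y, ple P x y <-> ple Q (f x) (f y)).

(* index set {(i,j) | i < n, j < s_i} for the power prod_i P_i^(s_i) *)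
Definition cnf_index (n : nat) (s : nat -> nat) : Type :=
  {p : nat * nat | fst p < n /\ snd p < s (fst p)}.

(* Main.v *)
Require Import Defs.
From Stdlib Require Import List Arith Lia Wellfounded.
From Stdlib Require Import ClassicalEpsilon ProofIrrelevance FunctionalExtensionality PropExtensionality Classical.

Lemma sig_eq {A : Type} {P : A -> Prop} (a b : {x : A | P x}) :
  proj1_sig a = proj1_sig b -> a = b.
Proof. destruct a, b; simpl; intros ->; f_equal; apply proof_irrelevance. Qed.

Definition SI {A B : woset} (g : wcar A -> wcar B) :=
  forall x y, wlt A x y -> wlt B (g x) (g y).
Definition Emb (A B : woset) := exists g : wcar A -> wcar B, SI g.
Definition WFself (W : woset) :=
  forall g : wcar W -> wcar W, SI g -> forall z, ~ wlt W (g z) z.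

Lemma wf_WFself W : well_founded (wlt W) -> WFself W.
Proof.
  intros Hwf g Hg z. induction (Hwf z) as [z _ IH]. intro H.
  apply (IH (g z) H). apply Hg. exact H.
Qed.

Lemma Emb_refl A : Emb A A.
Proof. exists (fun x => x). intros x y h; exact h. Qed.

Lemma Emb_trans A B C : Emb A B -> Emb B C -> Emb A C.
Proof. intros [f hf] [g hg]. exists (fun x => g (f x)). intros x y h; auto. Qed.

Lemma wf_wsum A B : well_founded (wlt A) -> well_founded (wlt B) ->
  well_founded (wlt (wsum A B)).
Proof.
  intros HA HB.
  assert (HL : forall a, Acc (wlt (wsum A B)) (inl a)).
  { intro a. induction (HA a) as [a _ IH]. constructor.
    intros [a'|b'] H; simpl in H; [apply IH; exact H | destruct H]. }
  intros [a|b]; [apply HL|].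
  induction (HB b) as [b _ IH]. constructor.
  intros [a'|b'] H; simpl in H; [apply HL | apply IH; exact H].
Qed.

Lemma wf_wmuln A s : well_founded (wlt A) -> well_founded (wlt (wmuln A s)).
Proof.
  intros HA.
  assert (H : forall n (j : {j | j < s}), proj1_sig j = n -> forall a,
            Acc (wlt (wmuln A s)) (j, a)).
  { intro n. induction n as [n IHn] using (well_founded_induction lt_wf).
    intros j Hj a. induction (HA a) as [a _ IHa]. constructor.
    intros [j' a'] Hlt. simpl in Hlt. destruct Hlt as [Hlt|[Heq Hlt]].
    - apply (IHn (proj1_sig j')); [lia|reflexivity].
    - assert (j' = j) by (apply sig_eq; exact Heq). subst j'.
      apply IHa; exact Hlt. }
  intros [j a]. apply (H (proj1_sig j) j eq_refl).
Qed.

Lemma wf_wfin m : well_founded (wlt (wfin m)).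
Proof.
  apply (wf_inverse_image _ _ lt (@proj1_sig nat (fun j => j < m))). apply lt_wf.
Qed.

Lemma wf_wseg D d : well_founded (wlt D) -> well_founded (wlt (wseg D d)).
Proof.
  intro H. apply (wf_inverse_image _ _ (wlt D) (@proj1_sig _ (fun x => wlt D x d))). exact H.
Qed.

Lemma st_wseg D d : strict_total (wlt D) -> strict_total (wlt (wseg D d)).
Proof.
  intros [Hi [Ht Htot]]. split; [|split]; simpl.
  - intros x; apply Hi.
  - intros x y z; apply Ht.
  - intros x y. destruct (Htot (proj1_sig x) (proj1_sig y)) as [h|[h|h]]; auto.
    right; left; apply sig_eq; exact h.
Qed.

Definition EmbAbove (E B : woset) :=
  forall b, exists g : wcar E -> wcar B, SI g /\ forall e, wlt B b (g e).

Section Omega.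
Variable W : woset.
Hypothesis Hst : strict_total (wlt W).

Lemma fin_max (P : wcar W -> Prop) l : (forall y, P y -> In y l) -> (exists y, P y) ->
  exists m, P m /\ forall y, P y -> y = m \/ wlt W y m.
Proof.
  destruct Hst as [Hi [Ht Htot]].
  revert P. induction l as [|a l IH]; intros P Hl [y Hy].
  - destruct (Hl y Hy).
  - destruct (classic (exists y, P y /\ y <> a)) as [[y' Hy']|Hno].
    + destruct (IH (fun y => P y /\ y <> a)) as [m' [[Pm' Nm'] Hm']].
      { intros z [Pz Nz]. destruct (Hl z Pz) as [->|]; [congruence|auto]. }
      { exists y'; exact Hy'. }
      destruct (classic (P a)) as [Pa|NPa].
      * destruct (Htot a m') as [h|[h|h]].
        -- exists m'. split; [auto|]. intros z Pz.
           destruct (classic (z = a)) as [->|Nz]; [right; exact h|]. apply Hm'; auto.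
        -- congruence.
        -- exists a. split; [auto|]. intros z Pz.
           destruct (classic (z = a)) as [->|Nz]; [left; reflexivity|]. right.
           destruct (Hm' z (conj Pz Nz)) as [->|h']; [exact h| eapply Ht; eauto].
      * exists m'. split; [auto|]. intros z Pz. apply Hm'. split; [auto|].
        intro; subst; contradiction.
    + assert (Pa : P a).
      { destruct (classic (y = a)) as [<-|N]; [auto|]. exfalso; apply Hno; eauto. }
      exists a. split; [auto|]. intros z Pz. left. apply NNPP. intro N. apply Hno; eauto.
Qed.

Notation O := (womega_pow W).

Lemma supp_max (u : wcar O) : (exists y, proj1_sig u y <> 0) ->
  exists m, proj1_sig u m <> 0 /\ forall y, proj1_sig u y <> 0 -> y = m \/ wlt W y m.
Proof.
  destruct (proj2_sig u) as [l Hl]. intro H. apply (fin_max _ l); auto.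
Qed.

Lemma Oadd_pf (u v : wcar O) : exists l : list (wcar W),
  forall x, proj1_sig u x + proj1_sig v x <> 0 -> In x l.
Proof.
  destruct (proj2_sig u) as [l1 H1]. destruct (proj2_sig v) as [l2 H2].
  exists (l1 ++ l2). intros x Hx. apply in_or_app.
  destruct (Nat.eq_dec (proj1_sig u x) 0); [right; apply H2; lia | left; apply H1; lia].
Qed.

Definition Oadd (u v : wcar O) : wcar O :=
  exist _ (fun y => proj1_sig u y + proj1_sig v y) (Oadd_pf u v).

Lemma Oadd_mono u1 u2 v : wlt O u1 u2 -> wlt O (Oadd u1 v) (Oadd u2 v).
Proof.
  intros [x [Hx Ha]]. exists x. simpl. split; [lia|].
  intros y Hy. rewrite (Ha y Hy). reflexivity.
Qed.

Lemma Olt_add w v : (exists y, proj1_sig w y <> 0) -> wlt O v (Oadd w v).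
Proof.
  destruct Hst as [Hi [Ht Htot]].
  intro H. destruct (supp_max w H) as [m [Hm Hmax]].
  exists m. simpl. split; [lia|].
  intros y Hy. assert (proj1_sig w y = 0).
  { destruct (Nat.eq_dec (proj1_sig w y) 0) as [e|n]; [exact e|].
    destruct (Hmax y n) as [->|h]; [destruct (Hi _ Hy)|destruct (Hi y (Ht _ _ _ h Hy))]. }
  lia.
Qed.

Lemma Ounit_pf (c : wcar W) : exists l : list (wcar W),
  forall x, (if excluded_middle_informative (x = c) then 1 else 0) <> 0 -> In x l.
Proof.
  exists (c :: nil). intros x. destruct (excluded_middle_informative (x = c)); simpl; auto.
  all: try (intros []; reflexivity).
Qed.

Definition Ounit (c : wcar W) : wcar O :=
  exist _ (fun y => if excluded_middle_informative (y = c) then 1 else 0) (Ounit_pf c).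

Lemma O_EmbAbove (c : wcar W) : EmbAbove O O.
Proof.
  intro b. exists (fun e => Oadd (Oadd e (Ounit c)) b). split.
  - intros x y h. apply Oadd_mono, Oadd_mono, h.
  - intro e. apply Olt_add. exists c. simpl.
    destruct (excluded_middle_informative (c = c)); [lia|congruence].
Qed.

Lemma Ozero_pf : exists l : list (wcar W), forall x, (fun _ : wcar W => 0) x <> 0 -> In x l.
Proof. exists nil. intros x h; exfalso; apply h; reflexivity. Qed.
Definition Ozero : wcar O := exist _ (fun _ => 0) Ozero_pf.

Lemma low_pf (m : wcar W) (u : wcar O) : exists l : list (wcar W),
  forall x, (if excluded_middle_informative (x = m) then 0 else proj1_sig u x) <> 0 -> In x l.
Proof.
  destruct (proj2_sig u) as [l Hl]. exists l. intros x.
  destruct (excluded_middle_informative (x = m)); [intros []; reflexivity|apply Hl].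
Qed.

Definition Olow (m : wcar W) (u : wcar O) : wcar O :=
  exist _ (fun x => if excluded_middle_informative (x = m) then 0 else proj1_sig u x) (low_pf m u).

Lemma O_wf : well_founded (wlt W) -> well_founded (wlt O).
Proof.
  intro Hwf. destruct Hst as [Hi [Ht Htot]].
  assert (Z : forall u : wcar O, (forall y, proj1_sig u y = 0) -> Acc (wlt O) u).
  { intros u Hz. constructor. intros g [x [Hx _]]. rewrite Hz in Hx. lia. }
  set (P := fun m => forall u : wcar O,
          (forall y, proj1_sig u y <> 0 -> y = m \/ wlt W y m) -> Acc (wlt O) u).
  assert (HP : forall m, P m).
  { intro m. induction m as [m IH] using (well_founded_induction Hwf).
    assert (Hlt : forall u : wcar O, (forall y, proj1_sig u y <> 0 -> wlt W y m) -> Acc (wlt O) u).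
    { intros u Hu. destruct (classic (exists y, proj1_sig u y <> 0)) as [Hex|Hno].
      - destruct (supp_max u Hex) as [m' [Hm' Hmax]]. apply (IH m' (Hu m' Hm')). exact Hmax.
      - apply Z. intro y. apply NNPP. intro N. apply Hno. eauto. }
    assert (Hk : forall k u, (forall y, proj1_sig u y <> 0 -> y = m \/ wlt W y m) ->
               proj1_sig u m = k -> Acc (wlt O) u).
    { intro k. induction k as [k IHk] using (well_founded_induction lt_wf).
      assert (Hh : forall h : wcar O, Acc (wlt O) h -> forall u : wcar O,
                 (forall y, proj1_sig u y <> 0 -> y = m \/ wlt W y m) ->
                 proj1_sig u m = k ->
                 (forall y, y <> m -> proj1_sig u y = proj1_sig h y) ->
                 proj1_sig h m = 0 -> Acc (wlt O) u).
      { intros h Hacc. induction Hacc as [h _ IHh].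
        intros u Hsupp Hum Heq Hhm. constructor. intros g [x [Hx Habove]].
        assert (Hsg : forall y, proj1_sig g y <> 0 -> y = m \/ wlt W y m).
        { intros y Hy. destruct (Htot y m) as [h1|[h1|h1]]; auto.
          exfalso. destruct (Htot x y) as [h2|[h2|h2]].
          - rewrite (Habove y h2) in Hy. destruct (Hsupp y Hy) as [->|h3].
            + exact (Hi _ h1). + exact (Hi _ (Ht _ _ _ h1 h3)).
          - subst y. assert (proj1_sig u x <> 0) by lia.
            destruct (Hsupp x H) as [->|h3]; [exact (Hi _ h1)|exact (Hi _ (Ht _ _ _ h1 h3))].
          -
            assert (proj1_sig u x <> 0) by lia.
            destruct (Hsupp x H) as [->|h3].
            + exact (Hi _ (Ht _ _ _ h1 h2)).
            + exact (Hi _ (Ht _ _ _ h1 (Ht _ _ _ h2 h3))). }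
        destruct (Htot x m) as [hx|[hx|hx]].
        - apply (IHh (Olow m g)).
          + exists x. simpl. split.
            * destruct (excluded_middle_informative (x = m)) as [e|_].
              { subst; destruct (Hi _ hx). }
              rewrite <- Heq; [exact Hx|]. intro; subst; exact (Hi _ hx).
            * intros y Hy. destruct (excluded_middle_informative (y = m)) as [->|n].
              { symmetry; exact Hhm. }
              rewrite (Habove y Hy). apply Heq; exact n.
          + exact Hsg.
          + rewrite (Habove m hx). exact Hum.
          + intros y n. simpl. destruct (excluded_middle_informative (y = m)); [contradiction|reflexivity].
          + simpl. destruct (excluded_middle_informative (m = m)); [reflexivity|congruence].
        - subst x. apply (IHk (proj1_sig g m)); [lia|exact Hsg|reflexivity].
        - exfalso. assert (proj1_sig u x <> 0) by lia.
          destruct (Hsupp x H) as [->|h3]; [exact (Hi _ hx)|exact (Hi _ (Ht _ _ _ hx h3))]. }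
      intros u Hsupp Hum. apply (Hh (Olow m u)).
      - apply Hlt. intros y. simpl. destruct (excluded_middle_informative (y = m)) as [_|n].
        + intros []; reflexivity.
        + intro Hy. destruct (Hsupp y Hy) as [e|h]; [contradiction|exact h].
      - exact Hsupp.
      - exact Hum.
      - intros y n. simpl. destruct (excluded_middle_informative (y = m)); [contradiction|reflexivity].
      - simpl. destruct (excluded_middle_informative (m = m)); [reflexivity|congruence]. }
    intros u Hu. apply (Hk (proj1_sig u m)); auto. }
  intro u. destruct (classic (exists y, proj1_sig u y <> 0)) as [Hex|Hno].
  - destruct (supp_max u Hex) as [m [_ Hmax]]. apply (HP m). exact Hmax.
  - apply Z. intro y. apply NNPP. intro N. apply Hno. eauto.
Qed.

End Omega.

Section Ext.
Variable D : woset.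
Hypothesis Htr : forall x y z, wlt D x y -> wlt D y z -> wlt D x z.
Variables a b : wcar D.
Hypothesis Hab : wlt D a b.

Definition incl (x : wcar (wseg D a)) : wcar (wseg D b) :=
  exist _ (proj1_sig x) (Htr _ _ _ (proj2_sig x) Hab).

Definition ext_fun (u : wcar (womega_pow (wseg D a))) (y : wcar (wseg D b)) : nat :=
  match excluded_middle_informative (wlt D (proj1_sig y) a) with
  | left h => proj1_sig u (exist _ (proj1_sig y) h)
  | right _ => 0 end.

Lemma ext_pf u : exists l : list (wcar (wseg D b)), forall x, ext_fun u x <> 0 -> In x l.
Proof.
  destruct (proj2_sig u) as [l Hl]. exists (map incl l). intros x. unfold ext_fun.
  destruct (excluded_middle_informative (wlt D (proj1_sig x) a)) as [h|h].
  - intro Hx. apply Hl in Hx. apply (in_map incl) in Hx.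
    replace x with (incl (exist _ (proj1_sig x) h)); [exact Hx|]. apply sig_eq; reflexivity.
  - intros []; reflexivity.
Qed.

Definition ext (u : wcar (womega_pow (wseg D a))) : wcar (womega_pow (wseg D b)) :=
  exist _ (ext_fun u) (ext_pf u).

Lemma ext_SI : SI ext.
Proof.
  intros u v [x [Hx Ha]]. exists (incl x). simpl. unfold ext_fun. simpl. split.
  - destruct (excluded_middle_informative (wlt D (proj1_sig x) a)) as [h|h].
    + replace (exist (fun x0 => wlt D x0 a) (proj1_sig x) h) with x; [exact Hx|].
      apply sig_eq; reflexivity.
    + destruct (h (proj2_sig x)).
  - intros y Hy. destruct (excluded_middle_informative (wlt D (proj1_sig y) a)) as [h|h]; [|reflexivity].
    apply Ha. exact Hy.
Qed.
End Ext.

Lemma Emb_ext D a b : strict_total (wlt D) -> a = b \/ wlt D a b ->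
  Emb (womega_pow (wseg D a)) (womega_pow (wseg D b)).
Proof.
  intros [Hi [Ht Htot]] [<-|h]; [apply Emb_refl|].
  exists (ext D Ht a b h). apply ext_SI.
Qed.

Lemma Emb_fin1 W : Emb (wfin 1) (womega_pow W).
Proof.
  exists (fun _ => Ozero W). intros [x hx] [y hy] h. simpl in h. lia.
Qed.

Definition Claim (R E : woset) := forall X, Emb E X -> ~ Emb (wsum X R) R.

Lemma claim_mono R E E' : Claim R E -> Emb E E' -> Claim R E'.
Proof. intros H He X Hx. apply H. eapply Emb_trans; eauto. Qed.

Definition sum_map {A A' B B' : woset} (f : wcar A -> wcar A') (g : wcar B -> wcar B')
  (w : wcar (wsum A B)) : wcar (wsum A' B') :=
  match w with inl a => inl (f a) | inr b => inr (g b) end.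

Lemma sum_map_SI {A A' B B' : woset} (f : wcar A -> wcar A') (g : wcar B -> wcar B') :
  SI f -> SI g -> SI (A := wsum A B) (B := wsum A' B') (sum_map f g).
Proof. intros hf hg [x|x] [y|y] h; simpl in *; auto. Qed.

Lemma claim_transfer R R2 E : Claim R E -> Emb R R2 -> Emb R2 R -> Claim R2 E.
Proof.
  intros H [phi hphi] [psi hpsi] X HX [h hh]. apply (H X HX).
  exists (fun w => psi (h (sum_map (fun x => x) phi w))).
  intros x y hxy. apply hpsi, hh. apply sum_map_SI; auto. intros u v e; exact e.
Qed.

Lemma claim_fin m : Claim (wfin m) (wfin 1).
Proof.
  intros X [g hg] [h hh].
  set (x0 := g (exist _ 0 (Nat.lt_0_1))).
  destruct (h (inl x0)) as [j hj] eqn:E0.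
  assert (Hi : forall i (pf : i < m), i + 1 <= proj1_sig (h (inr (exist _ i pf)))).
  { induction i as [|i IH]; intro pf.
    - assert (hl := hh (inl x0) (inr (exist _ 0 pf)) I). simpl in hl. lia.
    - assert (pf' : i < m) by lia.
      assert (hl := hh (inr (exist _ i pf')) (inr (exist _ (S i) pf))). simpl in hl.
      specialize (IH pf'). specialize (hl ltac:(lia)). lia. }
  assert (pf : m - 1 < m) by lia.
  specialize (Hi (m - 1) pf). destruct (h (inr (exist _ (m - 1) pf))) as [k hk]. simpl in Hi. lia.
Qed.

Lemma claim_step R' E' B : Claim R' E' -> EmbAbove E' B -> (exists b : wcar B, True) ->
  WFself B -> Claim (wsum B R') B.
Proof.
  intros HR HA [b0 _] HWF X [gX hgX] [h hh].
  destruct (h (inr (inl b0))) as [z|r0] eqn:E0.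
  - assert (Hz : forall x, exists z', h (inl x) = inl z' /\ wlt B z' z).
    { intro x. assert (hl := hh (inl x) (inr (inl b0)) I). rewrite E0 in hl.
      destruct (h (inl x)) as [z'|r']; simpl in hl; [eauto|destruct hl]. }
    set (k := fun b => proj1_sig (constructive_indefinite_description _ (Hz (gX b)))).
    assert (Hk : forall b, h (inl (gX b)) = inl (k b) /\ wlt B (k b) z).
    { intro b. unfold k. destruct (constructive_indefinite_description _ _); exact a. }
    assert (Hsi : SI k).
    { intros x y hxy. assert (hl := hh (inl (gX x)) (inl (gX y)) (hgX _ _ hxy)).
      destruct (Hk x) as [E1 _]. destruct (Hk y) as [E2 _]. rewrite E1, E2 in hl. exact hl. }
    exact (HWF k Hsi z (proj2 (Hk z))).
  - destruct (HA b0) as [gA [hgA hab]].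
    set (out := fun w : wcar (wsum B R') => match w with inl _ => r0 | inr r => r end).
    assert (Hr : forall w, wlt (wsum B R') (inr r0) w -> w = inr (out w)).
    { intros [w|w] hw; simpl in hw; [destruct hw|reflexivity]. }
    apply (HR E' (Emb_refl E')).
    exists (fun w => match w with inl e => out (h (inr (inl (gA e))))
                            | inr r => out (h (inr (inr r))) end).
    assert (L1 : forall e, h (inr (inl (gA e))) = inr (out (h (inr (inl (gA e)))))).
    { intro e. apply Hr. rewrite <- E0. apply hh. exact (hab e). }
    assert (L2 : forall r, h (inr (inr r)) = inr (out (h (inr (inr r))))).
    { intro r. apply Hr. rewrite <- E0. apply hh. exact I. }
    intros [x|x] [y|y] hxy; simpl in hxy.
    + assert (hl := hh (inr (inl (gA x))) (inr (inl (gA y))) (hgA _ _ hxy)).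
      rewrite L1, (L1 y) in hl. exact hl.
    + assert (hl := hh (inr (inl (gA x))) (inr (inr y)) I).
      rewrite L1, (L2 y) in hl. exact hl.
    + destruct hxy.
    + assert (hl := hh (inr (inr x)) (inr (inr y)) hxy).
      rewrite L2, (L2 y) in hl. exact hl.
Qed.

Lemma EmbAbove_comp E E2 B : Emb E E2 -> EmbAbove E2 B -> EmbAbove E B.
Proof.
  intros [f hf] H b. destruct (H b) as [g [hg ha]]. exists (fun e => g (f e)). split; auto.
  intros x y h; auto.
Qed.

Lemma EmbAbove_Emb E B : EmbAbove E B -> (exists b : wcar B, True) -> Emb E B.
Proof. intros H [b _]. destruct (H b) as [g [hg _]]. exists g; exact hg. Qed.

Lemma Emb_fin1_any B : (exists b : wcar B, True) -> Emb (wfin 1) B.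
Proof. intros [b _]. exists (fun _ => b). intros [x hx] [y hy] h; simpl in h; lia. Qed.

Lemma Emb_muln0_l B R : Emb (wsum (wmuln B 0) R) R.
Proof.
  exists (fun w => match w with inl p => False_rect _ (Nat.nlt_0_r _ (proj2_sig (fst p)))
                          | inr r => r end).
  intros [[[j hj] u]|x] y h; [exfalso; lia|].
  destruct y as [[[j hj] u]|y]; [exfalso; lia|exact h].
Qed.

Lemma Emb_muln0_r B R : Emb R (wsum (wmuln B 0) R).
Proof. exists inr. intros x y h; exact h. Qed.

Definition phiS {B R : woset} {t : nat} (w : wcar (wsum (wmuln B (S t)) R))
  : wcar (wsum B (wsum (wmuln B t) R)) :=
  match w with
  | inl (exist _ 0 _, u) => inl u
  | inl (exist _ (S j') pf, u) => inr (inl (exist _ j' (proj2 (Nat.succ_lt_mono _ _) pf), u))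
  | inr r => inr (inr r)
  end.

Definition psiS {B R : woset} {t : nat} (w : wcar (wsum B (wsum (wmuln B t) R)))
  : wcar (wsum (wmuln B (S t)) R) :=
  match w with
  | inl u => inl (exist _ 0 (Nat.lt_0_succ t), u)
  | inr (inl (j, u)) => inl (exist _ (S (proj1_sig j)) (proj1 (Nat.succ_lt_mono _ _) (proj2_sig j)), u)
  | inr (inr r) => inr r
  end.

Lemma phiS_SI B R t : SI (@phiS B R t).
Proof.
  intros [[[[|j] hj] u]|x] [[[[|k] hk] v]|y] h; simpl in *; auto; try lia.
  - destruct h as [h|[h1 h2]]; [lia|exact h2].
  - destruct h as [h|[h1 h2]]; [lia|right; split; [lia|exact h2]].
Qed.

Lemma psiS_SI B R t : SI (@psiS B R t).
Proof.
  intros [u|[[[j hj] u]|x]] [v|[[[k hk] v]|y]] h; simpl in *; auto; try lia; try (destruct h).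
  all: first [left; lia | right; split; [lia|assumption] | idtac].
  all: destruct H as [H1 H2]; right; split; [lia|exact H2].
Qed.

Lemma claim_muln R' E' B : Claim R' E' -> EmbAbove E' B -> EmbAbove B B ->
  (exists b : wcar B, True) -> WFself B -> forall t, Claim (wsum (wmuln B t) R') B.
Proof.
  intros HR HA HBB Hinh HWF t. induction t as [|t IH].
  - apply (claim_transfer R'); [|apply Emb_muln0_r|apply Emb_muln0_l].
    eapply claim_mono; [exact HR|]. apply EmbAbove_Emb; auto.
  - apply (claim_transfer (wsum B (wsum (wmuln B t) R'))).
    + apply (claim_step _ B); auto.
    + exists psiS. apply psiS_SI.
    + exists phiS. apply phiS_SI.
Qed.

Lemma claim_muln_alone B : EmbAbove B B -> (exists b : wcar B, True) -> WFself B ->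
  forall r, Claim (wmuln B r) B.
Proof.
  intros HBB Hinh HWF r.
  apply (claim_transfer (wsum (wmuln B r) (wfin 0))).
  - apply (claim_muln _ (wfin 1)); auto.
    + apply claim_fin.
    + apply (EmbAbove_comp _ B); auto. apply Emb_fin1_any; auto.
  - destruct Hinh as [b _].
    exists (fun w => match w with inl p => p
                     | inr q => False_rect _ (Nat.nlt_0_r _ (proj2_sig q)) end).
    intros [x|[q hq]] [y|[q' hq']] h; simpl in *; try lia; try exact h; destruct h.
  - exists inl. intros x y h; exact h.
Qed.

Lemma rig_sum A R E : WFself (wsum A R) -> Claim R E -> EmbAbove E A ->
  forall f : wcar (wsum A R) -> wcar (wsum A R), SI f ->
  (forall a, exists a', f (inl a) = inl a') /\ (forall r, exists r', f (inr r) = inr r').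
Proof.
  intros HWF HC HA f hf.
  assert (HR : forall r, exists r', f (inr r) = inr r').
  { intro r. destruct (f (inr r)) as [a'|r'] eqn:Ef.
    - exfalso. apply (HWF f hf (inr r)). rewrite Ef. exact I.
    - eauto. }
  split; [|exact HR].
  intro a. destruct (f (inl a)) as [a'|r0] eqn:E0; [eauto|exfalso].
  destruct (HA a) as [gA [hgA hab]].
  set (out := fun w : wcar (wsum A R) => match w with inl _ => r0 | inr r => r end).
  assert (L1 : forall e, f (inl (gA e)) = inr (out (f (inl (gA e))))).
  { intro e. assert (hl := hf (inl a) (inl (gA e)) (hab e)). rewrite E0 in hl.
    destruct (f (inl (gA e))); simpl in *; [destruct hl|reflexivity]. }
  assert (L2 : forall r, f (inr r) = inr (out (f (inr r)))).
  { intro r. destruct (HR r) as [r' Er]. rewrite Er. reflexivity. }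
  apply (HC E (Emb_refl E)).
  exists (fun w => match w with inl e => out (f (inl (gA e))) | inr r => out (f (inr r)) end).
  intros [x|x] [y|y] hxy; simpl in hxy.
  - assert (hl := hf (inl (gA x)) (inl (gA y)) (hgA _ _ hxy)).
    rewrite L1, (L1 y) in hl. exact hl.
  - assert (hl := hf (inl (gA x)) (inr y) I). rewrite L1, (L2 y) in hl. exact hl.
  - destruct hxy.
  - assert (hl := hf (inr x) (inr y) hxy). rewrite L2, (L2 y) in hl. exact hl.
Qed.

Lemma rig_muln B t : WFself (wmuln B t) -> EmbAbove B B -> (forall r, Claim (wmuln B r) B) ->
  forall f : wcar (wmuln B t) -> wcar (wmuln B t), SI f ->
  forall j u, exists v, f (j, u) = (j, v).
Proof.
  intros HWF HBB HC f hf j u.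
  destruct (f (j, u)) as [j' v] eqn:E0. exists v.
  assert (Hj : proj1_sig j' = proj1_sig j).
  { destruct (lt_eq_lt_dec (proj1_sig j') (proj1_sig j)) as [[h|h]|h]; [|exact h|].
    - exfalso. apply (HWF f hf (j, u)). rewrite E0. left; exact h.
    - exfalso. set (jn := proj1_sig j) in *.
      assert (Hjt : jn + 1 < t) by (pose proof (proj2_sig j'); simpl in *; lia).
      set (r := t - jn - 1).
      assert (Hsh : forall i, i < t -> i - jn - 1 < r) by (intros; unfold r; lia).
      assert (Hb : forall i, i < r -> i + jn + 1 < t) by (intros; unfold r in *; lia).
      set (shift := fun p : wcar (wmuln B t) =>
        (exist (fun i => i < r) (proj1_sig (fst p) - jn - 1) (Hsh _ (proj2_sig (fst p))), snd p)
          : wcar (wmuln B r)).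
      set (back := fun p : wcar (wmuln B r) =>
        (exist (fun i => i < t) (proj1_sig (fst p) + jn + 1) (Hb _ (proj2_sig (fst p))), snd p)
          : wcar (wmuln B t)).
      destruct (HBB u) as [gA [hgA hab]].
      assert (F1 : forall e, jn < proj1_sig (fst (f (j, gA e)))).
      { intro e. assert (hl := hf (j, u) (j, gA e) (or_intror (conj eq_refl (hab e)))).
        rewrite E0 in hl. destruct (f (j, gA e)) as [k w]. simpl in *. lia. }
      assert (F2 : forall p, jn < proj1_sig (fst (f (back p)))).
      { intro p. destruct (f (back p)) as [k w] eqn:Ek. simpl.
        destruct (le_lt_dec (proj1_sig k) jn) as [hk|hk]; [|exact hk].
        exfalso. apply (HWF f hf (back p)). rewrite Ek. left. simpl. lia. }
      assert (Sh : forall p q, jn < proj1_sig (fst p) -> jn < proj1_sig (fst q) ->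
                  wlt (wmuln B t) p q -> wlt (wmuln B r) (shift p) (shift q)).
      { intros [[p1 hp1] p2] [[q1 hq1] q2] h1 h2 [h5|[h3 h4]]; simpl in *.
        - left; lia.
        - right; split; [lia|exact h4]. }
      apply (HC r B (Emb_refl B)).
      exists (fun w => match w with inl e => shift (f (j, gA e)) | inr p => shift (f (back p)) end).
      intros [x|x] [y|y] hxy; simpl in hxy.
      + apply Sh; auto. apply hf. right. split; [reflexivity|]. apply hgA; exact hxy.
      + apply Sh; auto. apply hf. left. simpl. lia.
      + destruct hxy.
      + apply Sh; auto. apply hf. destruct x as [[x1 hx1] x2], y as [[y1 hy1] y2].
        simpl in *. destruct hxy as [h7|[h8 h9]]; [left; lia|right; split; [lia|exact h9]]. }
  f_equal. apply sig_eq. exact Hj.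
Qed.

Definition prod2 (P Q : preord) : preord :=
  PreOrd (pcar P * pcar Q) (fun x y => ple P (fst x) (fst y) /\ ple Q (snd x) (snd y)).

Lemma po_iso_refl P : po_iso P P.
Proof. exists (fun x => x). split; [auto|split; [eauto|tauto]]. Qed.

Lemma po_iso_sym P Q : po_iso P Q -> po_iso Q P.
Proof.
  intros [f [Hinj [Hsurj Hord]]].
  set (g := fun z => proj1_sig (constructive_indefinite_description _ (Hsurj z))).
  assert (Hg : forall z, f (g z) = z).
  { intro z. unfold g. destruct (constructive_indefinite_description _ _); assumption. }
  exists g. split; [|split].
  - intros x y e. rewrite <- (Hg x), <- (Hg y), e. reflexivity.
  - intro z. exists (f z). apply Hinj. rewrite Hg. reflexivity.
  - intros x y. rewrite Hord, !Hg. tauto.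
Qed.

Lemma po_iso_trans P Q R : po_iso P Q -> po_iso Q R -> po_iso P R.
Proof.
  intros [f [fi [fs fo]]] [g [gi [gs go]]]. exists (fun x => g (f x)). split; [|split].
  - intros x y e. auto.
  - intro z. destruct (gs z) as [y <-]. destruct (fs y) as [x <-]. eauto.
  - intros x y. rewrite fo, go. tauto.
Qed.

Lemma iso_prod2 P P' Q Q' : po_iso P P' -> po_iso Q Q' -> po_iso (prod2 P Q) (prod2 P' Q').
Proof.
  intros [f [fi [fs fo]]] [g [gi [gs go]]].
  exists (fun x => (f (fst x), g (snd x))). split; [|split].
  - intros [x1 x2] [y1 y2] e. simpl in e. injection e; intros. f_equal; auto.
  - intros [z1 z2]. destruct (fs z1) as [x1 <-]. destruct (gs z2) as [x2 <-]. exists (x1, x2). reflexivity.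
  - intros [x1 x2] [y1 y2]. simpl. rewrite fo, go. tauto.
Qed.

Section CopiesSum.
Variables A B : woset.
Hypothesis Hrig : forall f : wcar (wsum A B) -> wcar (wsum A B), SI f ->
  (forall a, exists a', f (inl a) = inl a') /\ (forall r, exists r', f (inr r) = inr r').

Lemma restr_l (C : pcar (copiesPO (wsum A B))) : exists g : wcar A -> wcar A,
  strictly_increasing g /\ forall y, proj1_sig C (inl y) <-> exists x, y = g x.
Proof.
  destruct (proj2_sig C) as [f [hf hC]]. destruct (Hrig f hf) as [HL HR].
  set (g := fun a => proj1_sig (constructive_indefinite_description _ (HL a))).
  assert (Hg : forall a, f (inl a) = inl (g a)).
  { intro a. unfold g. destruct (constructive_indefinite_description _ _); assumption. }
  exists g. split.
  - intros x y h. assert (hl := hf (inl x) (inl y) h). rewrite !Hg in hl. exact hl.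
  - intro y. rewrite hC. split.
    + intros [[a|r] e].
      * rewrite Hg in e. injection e; intros; eauto.
      * destruct (HR r) as [r' E]. rewrite E in e. discriminate.
    + intros [x ->]. exists (inl x). rewrite Hg. reflexivity.
Qed.

Lemma restr_r (C : pcar (copiesPO (wsum A B))) : exists g : wcar B -> wcar B,
  strictly_increasing g /\ forall y, proj1_sig C (inr y) <-> exists x, y = g x.
Proof.
  destruct (proj2_sig C) as [f [hf hC]]. destruct (Hrig f hf) as [HL HR].
  set (g := fun a => proj1_sig (constructive_indefinite_description _ (HR a))).
  assert (Hg : forall a, f (inr a) = inr (g a)).
  { intro a. unfold g. destruct (constructive_indefinite_description _ _); assumption. }
  exists g. split.
  - intros x y h. assert (hl := hf (inr x) (inr y) h). rewrite !Hg in hl. exact hl.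
  - intro y. rewrite hC. split.
    + intros [[a|r] e].
      * destruct (HL a) as [a' E]. rewrite E in e. discriminate.
      * rewrite Hg in e. injection e; intros; eauto.
    + intros [x ->]. exists (inr x). rewrite Hg. reflexivity.
Qed.

Lemma copies_sum : po_iso (copiesPO (wsum A B)) (prod2 (copiesPO A) (copiesPO B)).
Proof.
  exists (fun C => (exist _ (fun a => proj1_sig C (inl a)) (restr_l C),
                    exist _ (fun b => proj1_sig C (inr b)) (restr_r C))
                   : pcar (prod2 (copiesPO A) (copiesPO B))).
  split; [|split].
  - intros C C' e. apply sig_eq. apply functional_extensionality. intros [a|b].
    + apply (f_equal (fun p => proj1_sig (fst p))) in e. simpl in e. exact (equal_f e a).
    + apply (f_equal (fun p => proj1_sig (snd p))) in e. simpl in e. exact (equal_f e b).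
  - intros [CA CB].
    destruct (proj2_sig CA) as [gA [hgA HA]]. destruct (proj2_sig CB) as [gB [hgB HB]].
    assert (Hc : exists f : wcar (wsum A B) -> wcar (wsum A B), strictly_increasing f /\
       forall y, (match y with inl a => proj1_sig CA a | inr b => proj1_sig CB b end) <->
                 exists x, y = f x).
    { exists (sum_map gA gB). split; [apply sum_map_SI; assumption|].
      intros [a|b].
      - rewrite HA. split; [intros [x ->]; exists (inl x); reflexivity|].
        intros [[x|x] e]; simpl in e; [injection e; eauto|discriminate].
      - rewrite HB. split; [intros [x ->]; exists (inr x); reflexivity|].
        intros [[x|x] e]; simpl in e; [discriminate|injection e; eauto]. }
    exists (exist _ (fun w : wcar (wsum A B) => match w with inl a => proj1_sig CA a | inr b => proj1_sig CB b end) Hc : pcar (copiesPO (wsum A B))). f_equal; apply sig_eq; reflexivity.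
  - intros C C'. simpl. split.
    + intro h. split; intro; apply h.
    + intros [h1 h2] [a|b]; [apply h1|apply h2].
Qed.
End CopiesSum.

Section CopiesMuln.
Variables (A : woset) (s : nat).
Hypothesis Hrig : forall f : wcar (wmuln A s) -> wcar (wmuln A s), SI f ->
  forall j u, exists v, f (j, u) = (j, v).

Lemma restr_j (C : pcar (copiesPO (wmuln A s))) j : exists g : wcar A -> wcar A,
  strictly_increasing g /\ forall y, proj1_sig C (j, y) <-> exists x, y = g x.
Proof.
  destruct (proj2_sig C) as [f [hf hC]].
  set (g := fun a => proj1_sig (constructive_indefinite_description _ (Hrig f hf j a))).
  assert (Hg : forall a, f (j, a) = (j, g a)).
  { intro a. unfold g. destruct (constructive_indefinite_description _ _); assumption. }
  exists g. split.
  - intros x y h. assert (hl := hf (j, x) (j, y) (or_intror (conj eq_refl h))).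
    rewrite !Hg in hl. destruct hl as [hl|[_ hl]]; [simpl in hl; lia|exact hl].
  - intro y. rewrite hC. split.
    + intros [[j' a] e]. destruct (Hrig f hf j' a) as [v E]. rewrite E in e.
      injection e; intros e1 e2. subst j'. rewrite Hg in E. injection E; intros; subst. eauto.
    + intros [x ->]. exists (j, x). rewrite Hg. reflexivity.
Qed.

Lemma copies_muln : po_iso (copiesPO (wmuln A s)) (prodPO {j | j < s} (fun _ => copiesPO A)).
Proof.
  exists (fun C => (fun j => exist _ (fun a => proj1_sig C (j, a)) (restr_j C j))
                   : pcar (prodPO {j | j < s} (fun _ => copiesPO A))).
  split; [|split].
  - intros C C' e. apply sig_eq. apply functional_extensionality. intros [j a].
    apply (f_equal (fun p => proj1_sig (p j))) in e. simpl in e. exact (equal_f e a).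
  - intro x.
    set (g := fun j => proj1_sig (constructive_indefinite_description _ (proj2_sig (x j)))).
    assert (Hg : forall j, strictly_increasing (g j) /\
                   forall y, proj1_sig (x j) y <-> exists z, y = g j z).
    { intro j. unfold g. destruct (constructive_indefinite_description _ _); assumption. }
    assert (Hc : exists f : wcar (wmuln A s) -> wcar (wmuln A s), strictly_increasing f /\
       forall y, proj1_sig (x (fst y)) (snd y) <-> exists z, y = f z).
    { exists (fun p => (fst p, g (fst p) (snd p))). split.
      - intros [j u] [k v] [h|[h1 h2]]; simpl in *; [left; exact h|].
        assert (j = k) by (apply sig_eq; exact h1). subst k.
        right; split; [reflexivity|apply (proj1 (Hg j)); exact h2].
      - intros [j u]. simpl. rewrite (proj2 (Hg j)). split.
        + intros [z ->]. exists (j, z). reflexivity.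
        + intros [[k z] e]. injection e; intros; subst. eauto. }
    exists (exist _ (fun y : wcar (wmuln A s) => proj1_sig (x (fst y)) (snd y)) Hc : pcar (copiesPO (wmuln A s))). apply functional_extensionality_dep. intro j. apply sig_eq. reflexivity.
  - intros C C'. simpl. split.
    + intros h j a. apply h.
    + intros h [j a]. apply h.
Qed.
End CopiesMuln.

Lemma fin_ge m (f : wcar (wfin m) -> wcar (wfin m)) : SI f ->
  forall j, proj1_sig j <= proj1_sig (f j).
Proof.
  intros hf j. destruct (le_lt_dec (proj1_sig j) (proj1_sig (f j))) as [h|h]; [exact h|].
  exfalso. exact (wf_WFself _ (wf_wfin m) f hf j h).
Qed.

Lemma fin_le m (f : wcar (wfin m) -> wcar (wfin m)) : SI f ->
  forall i j, i = m - 1 - proj1_sig j -> proj1_sig (f j) + i <= m - 1.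
Proof.
  intros hf i. induction i as [|i IH]; intros [j hj] Hi; simpl in *.
  - pose proof (proj2_sig (f (exist _ j hj))). simpl in H. lia.
  - assert (hj' : S j < m) by lia.
    specialize (IH (exist _ (S j) hj')). simpl in IH. specialize (IH ltac:(lia)).
    assert (hl := hf (exist _ j hj) (exist _ (S j) hj') ltac:(simpl; lia)). simpl in hl. lia.
Qed.

Lemma fin_id m (f : wcar (wfin m) -> wcar (wfin m)) : SI f -> forall j, f j = j.
Proof.
  intros hf j. apply sig_eq. pose proof (fin_ge m f hf j). pose proof (fin_le m f hf _ j eq_refl).
  pose proof (proj2_sig j). simpl in *. lia.
Qed.

Lemma copies_fin_full m (C : pcar (copiesPO (wfin m))) : proj1_sig C = fun _ => True.
Proof.
  destruct (proj2_sig C) as [f [hf hC]]. apply functional_extensionality. intro y.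
  apply propositional_extensionality. rewrite hC. split; [auto|]. intros _. exists y.
  rewrite (fin_id m f hf y). reflexivity.
Qed.

Lemma iso_fin_empty m (I : Type) (F : I -> preord) : (I -> False) ->
  po_iso (copiesPO (wfin m)) (prodPO I F).
Proof.
  intro HI. exists (fun _ => (fun i => False_rect _ (HI i)) : pcar (prodPO I F)). split; [|split].
  - intros x y _. apply sig_eq. rewrite !copies_fin_full. reflexivity.
  - intro z. assert (Hc : exists f : wcar (wfin m) -> wcar (wfin m), strictly_increasing f /\
                 forall y, (fun _ : wcar (wfin m) => True) y <-> exists x, y = f x).
    { exists (fun x => x). split; [intros x y h; exact h|]. intro y; split; eauto. }
    exists (exist _ _ Hc : pcar (copiesPO (wfin m))).
    apply functional_extensionality_dep. intro i. destruct (HI i).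
  - intros x y. simpl. split; [intros _ i; destruct (HI i)|].
    intros _ w _. assert (E := equal_f (copies_fin_full m y) w). simpl in E. rewrite E. exact Logic.I.
Qed.

Section Reindex.
Variables (H : nat -> preord) (s : nat -> nat) (k : nat).

Definition G (n : nat) (p : cnf_index n s) : preord := H (fst (proj1_sig p)).

Lemma pf1 j : j < s k -> fst (k, j) < S k /\ snd (k, j) < s (fst (k, j)).
Proof. simpl; intros; split; [lia|assumption]. Qed.

Lemma pf2 (p : nat * nat) : fst p < k /\ snd p < s (fst p) -> fst p < S k /\ snd p < s (fst p).
Proof. intros [h1 h2]; split; [lia|assumption]. Qed.

Definition Psi (x : pcar (prodPO (cnf_index (S k) s) (G (S k)))) :
  pcar (prod2 (prodPO {j | j < s k} (fun _ => H k)) (prodPO (cnf_index k s) (G k))) :=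
  (fun j => x (exist _ (k, proj1_sig j) (pf1 _ (proj2_sig j))),
   fun p => x (exist _ (proj1_sig p) (pf2 _ (proj2_sig p)))).

Lemma reindex_iso :
  po_iso (prodPO (cnf_index (S k) s) (G (S k)))
         (prod2 (prodPO {j | j < s k} (fun _ => H k)) (prodPO (cnf_index k s) (G k))).
Proof.
  exists Psi. split; [|split].
  - intros x x' e. apply functional_extensionality_dep. intros [[i j] pr].
    destruct (lt_dec i k) as [hi|hi].
    + apply (f_equal snd) in e. simpl in e.
      assert (pr2 : fst (i, j) < k /\ snd (i, j) < s (fst (i, j))) by (simpl in *; split; [lia|tauto]).
      assert (E := equal_f_dep e (exist _ (i, j) pr2)). simpl in E.
      replace pr with (pf2 (i, j) pr2) by apply proof_irrelevance. exact E.
    + assert (i = k) by (simpl in pr; lia). subst i.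
      apply (f_equal fst) in e. simpl in e.
      assert (hj : j < s k) by (simpl in pr; tauto).
      assert (E := equal_f_dep e (exist _ j hj)). simpl in E.
      replace pr with (pf1 j hj) by apply proof_irrelevance. exact E.
  - intros [y z].
    unshelve eexists.
    { intros [[i j] pr].
      destruct (lt_dec i k) as [hi|hi].
      - exact (z (exist _ (i, j) (conj hi (proj2 pr)))).
      - assert (e : k = i) by (simpl in pr; lia).
        refine (eq_rect k (fun i => pcar (H i)) (y (exist _ j _)) i e).
        destruct e. exact (proj2 pr). }
    unfold Psi. simpl. f_equal.
    + apply functional_extensionality_dep. intros [j hj]. simpl.
      destruct (lt_dec k k) as [hk|hk]; [lia|].
      match goal with |- eq_rect _ _ _ _ ?e = _ => rewrite (proof_irrelevance _ e eq_refl) end.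
      simpl. f_equal. first [apply sig_eq; reflexivity | f_equal; apply proof_irrelevance | apply proof_irrelevance].
    + apply functional_extensionality_dep. intros [[i j] pr]. simpl.
      destruct (lt_dec i k) as [hk|hk]; [|simpl in pr; lia].
      match goal with |- z (exist _ _ ?a) = z (exist _ _ ?b) => rewrite (proof_irrelevance _ a b) end. reflexivity.
  - intros x x'. simpl. split.
    + intros h. split; intro q; simpl;
      [exact (h (exist _ (k, proj1_sig q) (pf1 _ (proj2_sig q))))
      |exact (h (exist _ (proj1_sig q) (pf2 _ (proj2_sig q))))].
    + intros [h1 h2] [[i j] pr].
      destruct (lt_dec i k) as [hi|hi].
      * assert (pr2 : fst (i, j) < k /\ snd (i, j) < s (fst (i, j))) by (simpl in *; split; [lia|tauto]).
        specialize (h2 (exist _ (i, j) pr2)). simpl in h2.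
        replace pr with (pf2 (i, j) pr2) by apply proof_irrelevance. exact h2.
      * assert (i = k) by (simpl in pr; lia). subst i.
        assert (hj : j < s k) by (simpl in pr; tauto).
        specialize (h1 (exist _ j hj)). simpl in h1.
        replace pr with (pf1 j hj) by apply proof_irrelevance. exact h1.
Qed.
End Reindex.

Section CNF.
Variables (D : woset) (d : nat -> wcar D) (s : nat -> nat) (n m : nat).
Hypothesis HD : well_order (wlt D).
Hypothesis Hd : forall i j, i < j < n -> wlt D (d i) (d j).
Hypothesis Hd0 : exists x, wlt D x (d 0).

Definition Om i := womega_pow (wseg D (d i)).
Definition Ek k := match k with 0 => wfin 1 | S k' => Om k' end.

Lemma Om_wf i : well_founded (wlt (Om i)).
Proof.
  destruct HD as [Hst Hwf]. apply O_wf; [apply st_wseg; exact Hst|apply wf_wseg; exact Hwf].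
Qed.

Lemma seg_inh i : i < n -> exists c : wcar (wseg D (d i)), True.
Proof.
  intro hi. destruct Hd0 as [x hx]. destruct HD as [[_ [Ht _]] _].
  destruct i as [|i].
  - exists (exist _ x hx); auto.
  - exists (exist _ x (Ht _ _ _ hx (Hd 0 (S i) ltac:(lia)))); auto.
Qed.

Lemma Om_above i : i < n -> EmbAbove (Om i) (Om i).
Proof.
  intro hi. destruct (seg_inh i hi) as [c _]. apply O_EmbAbove; [|exact c].
  apply st_wseg. apply HD.
Qed.

Lemma Om_inh i : exists b : wcar (Om i), True.
Proof. exists (Ozero _); auto. Qed.

Lemma Ek_emb k : k < n -> Emb (Ek k) (Om k).
Proof.
  intro hk. destruct k as [|k]; simpl.
  - apply Emb_fin1.
  - apply Emb_ext; [apply HD|right; apply Hd; lia].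
Qed.

Lemma cnf_wf k : well_founded (wlt (cnf D d s k m)).
Proof.
  induction k as [|k IH]; [exact (wf_wfin m)|].
  change (well_founded (wlt (wsum (wmuln (Om k) (s k)) (cnf D d s k m)))).
  apply wf_wsum; [apply wf_wmuln; apply Om_wf|exact IH].
Qed.

Lemma claim_cnf k : k <= n -> Claim (cnf D d s k m) (Ek k).
Proof.
  induction k as [|k IH]; intro hk; [apply claim_fin|].
  exact (claim_muln (cnf D d s k m) (Ek k) (Om k) (IH ltac:(lia))
           (EmbAbove_comp _ _ _ (Ek_emb k ltac:(lia)) (Om_above k ltac:(lia)))
           (Om_above k ltac:(lia)) (Om_inh k) (wf_WFself _ (Om_wf k)) (s k)).
Qed.

Lemma rig_cnf k : k < n -> forall f : wcar (cnf D d s (S k) m) -> wcar (cnf D d s (S k) m), SI f ->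
  (forall a, exists a', f (inl a) = inl a') /\ (forall r, exists r', f (inr r) = inr r').
Proof.
  intros hk. apply (rig_sum (wmuln (Om k) (s k)) (cnf D d s k m) (Ek k)).
  - exact (wf_WFself _ (cnf_wf (S k))).
  - apply claim_cnf; lia.
  - intros [j u]. destruct (EmbAbove_comp _ _ _ (Ek_emb k hk) (Om_above k hk) u) as [g [hg ha]].
    exists (fun e => (j, g e)). split.
    + intros x y h. right. split; [reflexivity|apply hg; exact h].
    + intro e. right. split; [reflexivity|apply ha].
Qed.

Lemma rig_mul k : k < n -> forall f : wcar (wmuln (Om k) (s k)) -> wcar (wmuln (Om k) (s k)), SI f ->
  forall j u, exists v, f (j, u) = (j, v).
Proof.
  intro hk. apply rig_muln.
  - apply wf_WFself, wf_wmuln, Om_wf.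
  - apply Om_above; exact hk.
  - apply claim_muln_alone; [apply Om_above; exact hk|apply Om_inh|apply wf_WFself, Om_wf].
Qed.

Lemma copies_cnf k : k <= n ->
  po_iso (copiesPO (cnf D d s k m))
         (prodPO (cnf_index k s) (fun p => copiesPO (womega_pow (wseg D (d (fst (proj1_sig p))))))).
Proof.
  induction k as [|k IH]; intro hk.
  - apply iso_fin_empty. intros [[i j] [h _]]. simpl in h. lia.
  - eapply po_iso_trans; [apply copies_sum; apply rig_cnf; lia|].
    eapply po_iso_trans; [apply iso_prod2; [apply copies_muln; apply rig_mul; lia|apply IH; lia]|].
    apply po_iso_sym.
    exact (reindex_iso (fun i => copiesPO (womega_pow (wseg D (d i)))) s k).
Qed.
End CNF.

Lemma iso_inv P Q : po_iso P Q -> exists (f : pcar P -> pcar Q) (g : pcar Q -> pcar P),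
  (forall x, g (f x) = x) /\ (forall z, f (g z) = z) /\ (forall x y, ple P x y <-> ple Q (f x) (f y)).
Proof.
  intros [f [fi [fs fo]]].
  set (g := fun z => proj1_sig (constructive_indefinite_description _ (fs z))).
  assert (Hg : forall z, f (g z) = z).
  { intro z. unfold g. destruct (constructive_indefinite_description _ _); assumption. }
  exists f, g. split; [|split; [exact Hg|exact fo]].
  intro x. apply fi. apply Hg.
Qed.

Lemma smle_transfer P Q (f : pcar P -> pcar Q) (g : pcar Q -> pcar P) :
  (forall x, g (f x) = x) -> (forall z, f (g z) = z) -> (forall x y, ple P x y <-> ple Q (f x) (f y)) ->
  forall p q, smle P p q <-> smle Q (f p) (f q).
Proof.
  intros gf fg fo p q. split.
  - intros H r' hr. rewrite <- (fg r') in hr. apply fo in hr.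
    destruct (H _ hr) as [t [h1 h2]]. exists (f t). rewrite <- (fg r'). rewrite <- !fo. auto.
  - intros H r hr. apply fo in hr. destruct (H _ hr) as [t' [h1 h2]].
    exists (g t'). rewrite fo, fo, fg. auto.
Qed.

Lemma sm_iso P Q : po_iso P Q -> po_iso (smPO P) (smPO Q).
Proof.
  intro H. destruct (iso_inv P Q H) as [f [g [gf [fg fo]]]].
  exists f. split; [|split].
  - intros x y e. rewrite <- (gf x), <- (gf y), e. reflexivity.
  - intro z. exists (g z). apply fg.
  - intros x y. simpl. apply smle_transfer with g; auto.
Qed.

Lemma sq_iso P Q : po_iso P Q -> po_iso (sqPO P) (sqPO Q).
Proof.
  intro H. destruct (iso_inv P Q H) as [f [g [gf [fg fo]]]].
  assert (T := smle_transfer P Q f g gf fg fo).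
  assert (T' : forall a b, smle Q a b <-> smle P (g a) (g b)).
  { intros a b. rewrite T, !fg. tauto. }
  unshelve eexists.
  { intro C. exists (fun q => proj1_sig C (g q)).
    destruct (proj2_sig C) as [p0 H0]. exists (f p0). intro q. rewrite H0, !T, fg. tauto. }
  split; [|split].
  - intros C1 C2 e. apply (f_equal (@proj1_sig _ _)) in e. simpl in e.
    apply sig_eq. apply functional_extensionality. intro p.
    rewrite <- (gf p). exact (equal_f e (f p)).
  - intro K. unshelve eexists.
    { exists (fun p => proj1_sig K (f p)).
      destruct (proj2_sig K) as [q0 H0]. exists (g q0). intro p. rewrite H0, !T', gf. tauto. }
    apply sig_eq. simpl. apply functional_extensionality. intro q. rewrite fg. reflexivity.
  - intros C1 C2. simpl. split.
    + intros [p [q [h1 [h2 h3]]]]. exists (f p), (f q). rewrite !gf. rewrite <- T. auto.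
    + intros [p' [q' [h1 [h2 h3]]]]. exists (g p'), (g q'). rewrite <- T'. auto.
Qed.

Section ProdSep.
Variables (I : Type) (F : I -> preord).
Hypothesis Hrefl : forall i x, ple (F i) x x.
Hypothesis Htr : forall i x y z, ple (F i) x y -> ple (F i) y z -> ple (F i) x z.

Definition upd (p : forall i, pcar (F i)) (i : I) (r : pcar (F i)) : forall j, pcar (F j) :=
  fun j => match excluded_middle_informative (i = j) with
           | left e => eq_rect i (fun j => pcar (F j)) r j e
           | right _ => p j end.

Lemma upd_same p i r : upd p i r i = r.
Proof.
  unfold upd. destruct (excluded_middle_informative (i = i)) as [e|n]; [|congruence].
  rewrite (proof_irrelevance _ e eq_refl). reflexivity.
Qed.

Lemma upd_other p i r j : i <> j -> upd p i r j = p j.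
Proof. intro n. unfold upd. destruct (excluded_middle_informative (i = j)); [contradiction|reflexivity]. Qed.

Lemma smle_prod p q : smle (prodPO I F) p q <-> forall i, smle (F i) (p i) (q i).
Proof.
  split.
  - intros H i r hr. destruct (H (upd p i r)) as [t [h1 h2]].
    + intro j. destruct (classic (i = j)) as [<-|n].
      * rewrite upd_same. exact hr.
      * rewrite upd_other by exact n. apply Hrefl.
    + exists (t i). split; [|apply h2]. specialize (h1 i). rewrite upd_same in h1. exact h1.
  - intros H r hr.
    set (t := fun i => proj1_sig (constructive_indefinite_description _ (H i (r i) (hr i)))).
    exists t. split; intro i; unfold t; destruct (constructive_indefinite_description _ _) as [x hx]; simpl; tauto.
Qed.

Lemma smle_refl' (P : preord) : (forall x, ple P x x) -> forall x, smle P x x.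
Proof. intros h x r hr. exists r. split; auto. Qed.

Lemma smle_trans' (P : preord) : (forall x y z, ple P x y -> ple P y z -> ple P x z) ->
  forall x y z, smle P x y -> smle P y z -> smle P x z.
Proof.
  intros htr x y z h1 h2 r hr. destruct (h1 r hr) as [t [t1 t2]].
  destruct (h2 t t2) as [u [u1 u2]]. exists u. split; [exact (htr _ _ _ u1 t1)|exact u2].
Qed.

Lemma sm_prod : po_iso (smPO (prodPO I F)) (prodPO I (fun i => smPO (F i))).
Proof.
  exists (fun x => x). split; [auto|split; [eauto|]].
  intros x y. simpl. apply smle_prod.
Qed.

Definition eqv i a b := smle (F i) a b /\ smle (F i) b a.

Lemma class_prod (C : pcar (sqPO (prodPO I F))) : exists p1 : pcar (prodPO I F),
  forall p, proj1_sig C p <-> forall i, eqv i (p i) (p1 i).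
Proof.
  destruct (proj2_sig C) as [p1 H1]. exists p1. intro p. rewrite H1, !smle_prod.
  unfold eqv. split; [intros [h1 h2] i; auto|intro h; split; intro i; apply h].
Qed.

Lemma eqv_trans i a b c : eqv i a b -> eqv i b c -> eqv i a c.
Proof.
  intros [h1 h2] [h3 h4]. split; eapply smle_trans'; eauto; apply Htr.
Qed.
Lemma eqv_sym i a b : eqv i a b -> eqv i b a.
Proof. intros [h1 h2]; split; auto. Qed.
Lemma eqv_refl i a : eqv i a a.
Proof. split; apply smle_refl'; apply Hrefl. Qed.

Definition proj_class (C : pcar (sqPO (prodPO I F))) (i : I) : pcar (sqPO (F i)).
Proof.
  exists (fun q => exists p, proj1_sig C p /\ eqv i q (p i)).
  destruct (class_prod C) as [p1 H1]. exists (p1 i). intro q. split.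
  - intros [p [hp hq]]. pose proof (proj1 (H1 p) hp i) as e. change (eqv i (p1 i) q).
    apply (eqv_trans i (p1 i) (p i) q); apply eqv_sym; assumption.
  - intro hq. exists p1. split; [apply (proj2 (H1 p1)); intro; apply eqv_refl|apply eqv_sym; exact hq].
Defined.

Lemma proj_class_spec C p1 : (forall p, proj1_sig C p <-> forall i, eqv i (p i) (p1 i)) ->
  forall i q, proj1_sig (proj_class C i) q <-> eqv i q (p1 i).
Proof.
  intros H1 i q. simpl. split.
  - intros [p [hp hq]]. pose proof (proj1 (H1 p) hp i) as e. eapply eqv_trans; eauto.
  - intro hq. exists p1. split; [apply (proj2 (H1 p1)); intro; apply eqv_refl|exact hq].
Qed.

Lemma sq_prod : po_iso (sqPO (prodPO I F)) (prodPO I (fun i => sqPO (F i))).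
Proof.
  exists (fun C => (fun i => proj_class C i) : pcar (prodPO I (fun i => sqPO (F i)))).
  split; [|split].
  - intros C1 C2 e.
    destruct (class_prod C1) as [p1 H1]. destruct (class_prod C2) as [p2 H2].
    assert (E : forall i, eqv i (p1 i) (p2 i)).
    { intro i. assert (e' := f_equal (fun x => proj1_sig (x i)) e). cbv beta in e'.
      apply (proj_class_spec C2 p2 H2 i).
      assert (h1 : proj1_sig (proj_class C1 i) (p1 i)).
      { apply (proj_class_spec C1 p1 H1 i). apply eqv_refl. }
      rewrite e' in h1. exact h1. }
    apply sig_eq. apply functional_extensionality. intro p. apply propositional_extensionality.
    rewrite H1, H2. split; intros h i; [eapply eqv_trans; eauto|eapply eqv_trans; [apply h|apply eqv_sym; apply E]].
  - intro x.
    set (r := fun i => proj1_sig (constructive_indefinite_description _ (proj2_sig (x i)))).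
    assert (Hr : forall i q, proj1_sig (x i) q <-> eqv i q (r i)).
    { intros i q. unfold r. destruct (constructive_indefinite_description _ _) as [ri hri]. simpl.
      rewrite hri. unfold eqv. tauto. }
    unshelve eexists.
    { exists (fun p => forall i, proj1_sig (x i) (p i)). exists r. intro p.
      rewrite !smle_prod. split.
      - intro h. split; intro i; destruct (proj1 (Hr i (p i)) (h i)); auto.
      - intros [h1 h2] i. apply Hr. split; auto. }
    apply functional_extensionality_dep. intro i. apply sig_eq. apply functional_extensionality.
    intro q. apply propositional_extensionality.
    rewrite (proj_class_spec _ r); [symmetry; apply Hr|].
    intro p. simpl. split; intros h j; apply Hr; apply h.
  - intros C1 C2.
    destruct (class_prod C1) as [p1 H1]. destruct (class_prod C2) as [p2 H2]. simpl. split.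
    + intros [p [q [h1 [h2 h3]]]] i. exists (p i), (q i).
      split; [|split; [|apply smle_prod; exact h3]].
      * exists p. split; [exact h1|apply eqv_refl].
      * exists q. split; [exact h2|apply eqv_refl].
    + intro h.
      set (a := fun i => proj1_sig (constructive_indefinite_description _ (h i))).
      set (b := fun i => proj1_sig (constructive_indefinite_description _
                  (proj2_sig (constructive_indefinite_description _ (h i))))).
      assert (Hab : forall i, proj1_sig (proj_class C1 i) (a i) /\ proj1_sig (proj_class C2 i) (b i)
                     /\ smle (F i) (a i) (b i)).
      { intro i. unfold a, b. destruct (constructive_indefinite_description _ (h i)) as [ai [bi hi]].
        simpl. destruct (constructive_indefinite_description _ _) as [bi' hi']. simpl. exact hi'. }
      exists a, b. split; [|split].
      * apply H1. intro i. apply (proj_class_spec C1 p1 H1). apply Hab.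
      * apply H2. intro i. apply (proj_class_spec C2 p2 H2). apply Hab.
      * apply smle_prod. intro i. apply Hab.
Qed.
End ProdSep.

Theorem mainTheorem2 (D : woset) (d : nat -> wcar D) (s : nat -> nat) (n m : nat)
  (HD : well_order (wlt D))
  (Hn : 1 <= n)
  (Hs : forall i, i < n -> 1 <= s i)
  (Hd : forall i j, i < j < n -> wlt D (d i) (d j))
  (Hd0 : exists x, wlt D x (d 0)) :
  let alpha := cnf D d s n m in
  let F := fun k : cnf_index n s => copiesPO (womega_pow (wseg D (d (fst (proj1_sig k))))) in
  po_iso (copiesPO alpha) (prodPO (cnf_index n s) F) /\
  po_iso (smPO (copiesPO alpha)) (prodPO (cnf_index n s) (fun k => smPO (F k))) /\
  po_iso (sqPO (copiesPO alpha)) (prodPO (cnf_index n s) (fun k => sqPO (F k))).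
Proof.
  intros alpha F.
  assert (C : po_iso (copiesPO alpha) (prodPO (cnf_index n s) F)).
  { exact (copies_cnf D d s n m HD Hd Hd0 n (le_n n)). }
  assert (Hrefl : forall i x, ple (F i) x x) by (intros i x y h; exact h).
  assert (Htr : forall i x y z, ple (F i) x y -> ple (F i) y z -> ple (F i) x z)
    by (intros i x y z h1 h2 w h; apply h2, h1, h).
  split; [exact C|split].
  - eapply po_iso_trans; [apply sm_iso; exact C|]. apply sm_prod. exact Hrefl.
  - eapply po_iso_trans; [apply sq_iso; exact C|]. apply sq_prod; assumption.
Qed.
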